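(* Let $\Omega^*\subset\widehat{\mathbb C}$ be a domain with $\infty\in\Omega^*$ whose complementary components are uniformly fat. Then for each $\varepsilon>0$ there are at most finitely many components $B^*$ of $\widehat{\mathbb C}\setminus\Omega^*$ with $\mathrm{diam}(B^* )>\varepsilon$. In particular, at most countably many components of $\widehat{\mathbb C}\setminus\Omega^*$ are non-degenerate.
   Context: A measurable set $B\subset\mathbb C$ is $c$-fat ($c>0$) if $\mathrm{Area}(B\cap B(z,r))\ge cr^2$ for all $z\in B$ and $0<r\le\mathrm{diam}(B)$; single points are considered $c$-fat for every $c$. A family of sets is uniformly fat if every member is $c$-fat for one common $c>0$. *)

(* Defs.v *)
From HB Require Import structures.
From mathcomp Require Import all_boot all_order all_algebra.
From mathcomp Require Import all_classical all_reals all_analysis.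
Set Implicit Arguments. Unset Strict Implicit. Unset Printing Implicit Defensive.
Import Order.TTheory GRing.Theory Num.Theory.
Import numFieldNormedType.Exports.
Local Open Scope classical_set_scope.
Local Open Scope ring_scope.

(* The complex plane C is modelled as R * R (product topology = usual one);
   the Riemann sphere is its one-point compactification, with None = infinity. *)
Notation sphere R := (one_point_compactification (R * R)%type).

Definition edist (R : realType) (z w : R * R) : R :=
  Num.sqrt ((z.1 - w.1) ^+ 2 + (z.2 - w.2) ^+ 2).

Definition edisk (R : realType) (z : R * R) (r : R) : set (R * R) :=
  [set w | edist z w < r].

Definition ediam (R : realType) (B : set (R * R)) : \bar R :=
  ereal_sup [set (edist x y)%:E | x in B & y in B].

Definition area (R : realType) :=
  (@lebesgue_measure R \x @lebesgue_measure R)%E.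

(* c-fatness: Area(B ∩ B(z,r)) >= c r^2 for z in B, 0 < r <= diam B.
   (Single points are vacuously c-fat since their diameter is 0.) *)
Definition fat (R : realType) (c : R) (B : set (R * R)) : Prop :=
  forall z, B z -> forall r : R, 0 < r -> (r%:E <= ediam B)%E ->
    ((c * r ^+ 2)%:E <= @area R (B `&` edisk z r))%E.

Definition compl_components (R : realType) (Om : set (sphere R))
  : set (set (sphere R)) :=
  [set C | exists p, ~ Om p /\ C = connected_component (~` Om) p].

Definition finpart (R : realType) (C : set (sphere R)) : set (R * R) :=
  Some @^-1` C.

(* Main.v *)
Require Import Defs.
From HB Require Import structures.
From mathcomp Require Import all_boot all_order all_algebra.
From mathcomp Require Import all_classical all_reals all_analysis.
From mathcomp Require Import finmap lra measurable_realfun.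
Import Order.TTheory GRing.Theory Num.Theory.
Import numFieldNormedType.Exports.
Local Open Scope classical_set_scope.
Local Open Scope ring_scope.
Section S.
Variable R : realType.
Definition box (a b r : R) : set (R * R) := `]a - r, a + r[ `*` `]b - r, b + r[.

Lemma box_meas a b r : measurable (box a b r).
Proof. by apply: measurableX; apply: measurable_itv. Qed.

Lemma open_meas2 (U : set (R * R)) : open U -> measurable U.
Proof.
move=> oU.
pose F (q1 q2 : rat) (n : nat) : set (R * R) :=
  if `[< box (ratr q1) (ratr q2) n.+1%:R^-1 `<=` U >] then box (ratr q1) (ratr q2) n.+1%:R^-1 else set0.
have -> : U = \bigcup_q1 \bigcup_q2 \bigcup_n F q1 q2 n.
  apply/seteqP; split; last first.
    move=> y [q1 _ [q2 _ [n _]]]; rewrite /F; case: asboolP => //= h; exact: h.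
  move=> x Ux.
  have := oU x Ux; move=> /nbhs_ballP[e /= e0 sub].
  pose n := Num.Def.truncn (2 / e).
  have hn : 2 / e < n.+1%:R by exact: archimedean.Num.Theory.truncnS_gt.
  set r : R := n.+1%:R^-1.
  have r0 : 0 < r by rewrite /r invr_gt0.
  have r2 : r * 2 < e.
    rewrite /r mulrC ltr_pdivrMr ?ltr0n //.
    by rewrite ltr_pdivrMr // in hn; rewrite mulrC.
  have [q1 hq1] : exists q : rat, ratr q \in `]x.1 - r, x.1 + r[ by apply: rat_in_itvoo; lra.
  move: hq1; rewrite in_itv /= => /andP[a1 a2].
  have [q2 hq2] : exists q : rat, ratr q \in `]x.2 - r, x.2 + r[ by apply: rat_in_itvoo; lra.
  move: hq2; rewrite in_itv /= => /andP[b1 b2].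
  exists q1 => //; exists q2 => //; exists n => //.
  rewrite /F; case: asboolP => [_ | nb].
    by split => /=; rewrite in_itv /= -/r; apply/andP; split; lra.
  exfalso; apply: nb => y [/=]; rewrite !in_itv /= => /andP[c1 c2] /andP[d1 d2].
  apply: sub; rewrite /ball /= /prod_ball -!ball_normE /ball_ /= !ltr_norml.
  by rewrite -/r in c1 c2 d1 d2; split; apply/andP; split; lra.
apply: (bigcupT_measurable_rat (T := (R * R)%type)) => q1.
apply: (bigcupT_measurable_rat (T := (R * R)%type)) => q2.
apply: bigcupT_measurable => n; rewrite /F; case: asboolP => _ //; exact: box_meas.
Qed.
Lemma edist_meas (z : R * R) : measurable_fun setT (fun w : R * R => Defs.edist z w).
Proof.
rewrite /Defs.edist.
apply: (measurableT_comp (measurable_realfun.continuous_measurable_fun (@sqrt_continuous R))).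
by apply: measurable_funD; apply: measurable_funX; apply: measurable_funB.
Qed.

Lemma edisk_meas (z : R * R) (r : R) : measurable (edisk z r).
Proof.
have mi := @measurable_itv R `]-oo, r[.
have := edist_meas z measurableT _ mi.
rewrite setTI; congr measurable; apply/seteqP; split => w /=; rewrite /edisk /= in_itv /=; by [].
Qed.
Lemma bnd (W : set (R * R)) : compact W -> exists M : R, 0 < M /\ forall w, W w -> `|w.1| <= M /\ `|w.2| <= M.
Proof.
move=> /compact_bounded [M0 [M0r HM]].
exists (`|M0| + 1); split; first by rewrite ltr_pwDr // ?ltr01.
move=> w Ww.
have /= := HM (`|M0| + 1) _ w Ww; rewrite prod_normE ge_max => /(_ _)/andP[] //.
by apply: (le_lt_trans (real_ler_norm M0r)); rewrite ltrDl ltr01.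
Qed.
Lemma compl_in (Om : set (sphere R)) : open Om -> Om None -> exists W : set (R * R), compact W /\ forall w, ~ Om (Some w) -> W w.
Proof.
rewrite openE => /[apply].
move=> [U [cU clU] sub]; exists U; split => // w nO.
by apply: contrapT => nU; apply: nO; apply: sub; left; exists w.
Qed.
Lemma comp_meas (Om : set (sphere R)) C : open Om -> compl_components Om C ->
  measurable (finpart C).
Proof.
move=> oOm [p [_ ->]].
have cl : closed (finpart (connected_component (~` Om) p)).
  rewrite /finpart; apply: (@preimage_closed (R * R)%type (sphere R) Some).
    move=> x _; exact: one_point_compactification_some_continuous.
  by apply: component_closed; exact: open_closedC.
rewrite -[finpart _]setCK; apply: measurableC; apply: open_meas2.
by rewrite openC.
Qed.
Lemma edist_ge1 (a b : R * R) : `|a.1 - b.1| <= Defs.edist a b.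
Proof.
rewrite /Defs.edist -sqrtr_sqr ler_sqrt ?addr_ge0 ?sqr_ge0 //.
by rewrite lerDl sqr_ge0.
Qed.
Lemma edist_ge2 (a b : R * R) : `|a.2 - b.2| <= Defs.edist a b.
Proof.
rewrite /Defs.edist -sqrtr_sqr ler_sqrt ?addr_ge0 ?sqr_ge0 //.
by rewrite lerDr sqr_ge0.
Qed.
Lemma fin_big (Om : set (sphere R)) (c eps : R) : open Om -> Om None -> 0 < c ->
  (forall C, compl_components Om C -> fat c (finpart C)) -> 0 < eps ->
  finite_set [set C | compl_components Om C /\ (eps%:E < ediam (finpart C))%E].
Proof.
move=> oOm OmN c0 fatC e0.
have [W [cW WOm]] := compl_in _ oOm OmN.
have [M [M0 HM]] := bnd _ cW.
set L := M + eps.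
set S := [set C | _ /\ _].
apply: contrapT => infS.
set n := (Num.Def.truncn ((2 * L) ^+ 2 / (c * eps ^+ 2))).+1.
have [B BS Bn] := infinite_set_fset n infS.
pose z (C : set (sphere R)) : R * R := xget (0, 0) (finpart C).
pose Fs C := finpart C `&` edisk (z C) eps.
have zin C : S C -> finpart C (z C).
  move=> [_ hd]; rewrite /z; case: xgetP => // hn.
  exfalso; move: hd; rewrite /ediam.
  rewrite (_ : [set (Defs.edist x y)%:E | x in finpart C & y in finpart C] = set0).
    by rewrite ereal_sup0.
  by apply/seteqP; split => // e [x xC]; case: (hn x xC).
have Fbig C : S C -> ((c * eps ^+ 2)%:E <= area (Fs C))%E.
  move=> SC; have [cc hd] := SC; apply: (fatC _ cc) => //; first exact: zin.
  exact: ltW.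
have Fmeas C : S C -> measurable (Fs C).
  move=> [cc _]; apply: measurableI; first exact: (comp_meas _ _ oOm cc).
  exact: edisk_meas.
have Fbox C : S C -> Fs C `<=` box 0 0 L.
  move=> SC w [_ hw].
  have zC := zin C SC.
  have [[p [_ eC]] _] := SC.
  have nO : ~ Om (Some (z C)).
    by move: zC; rewrite /finpart /= eC => /connected_component_sub.
  have [h1 h2] := HM _ (WOm _ nO).
  rewrite /edisk /= in hw.
  have g1 := edist_ge1 (z C) w; have g2 := edist_ge2 (z C) w.
  rewrite !ler_norml in g1 g2 h1 h2.
  move: g1 g2 h1 h2 => /andP[g1 g1'] /andP[g2 g2'] /andP[h1 h1'] /andP[h2 h2'].
  by rewrite /box /L; split => /=; rewrite in_itv /=; apply/andP; split; lra.
have triv : trivIset [set` B] Fs.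
  move=> C1 C2 /BS [[p1 [_ e1]] _] /BS [[p2 [_ e2]] _] [w [[h1 _] [h2 _]]].
  move: h1 h2; rewrite /finpart /= e1 e2 => h1 h2.
  by rewrite (same_connected_component h1) (same_connected_component h2).
have equ := measure_fin_bigcup (@lebesgue_measure R \x @lebesgue_measure R)%E (finite_fset B) triv (fun C h => Fmeas C (BS _ h)).
have le1 : (area (\bigcup_(i in [set` B]) Fs i) <= area (box 0 0 L))%E.
  apply: le_measure; first by apply/mem_set; exact: (fin_bigcup_measurable (finite_fset B) (fun C h => Fmeas C (BS _ h))).
  - by apply/mem_set; exact: box_meas.
  - by move=> w [C /BS SC]; apply: Fbox.
have L0 : 0 < L by rewrite /L addr_gt0.
have abox : area (box 0 0 L) = ((2 * L) ^+ 2)%:E.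
  rewrite /area /box product_measure1E; try exact: measurable_itv.
  have li := @lebesgue_measure_itv R `](0 - L)%R, (0 + L)%R[.
  rewrite /= lte_fin (_ : (0 - L < 0 + L) = true) in li; last by apply/idP; lra.
  transitivity (@lebesgue_measure R `](0 - L)%R, (0 + L)%R[ * @lebesgue_measure R `](0 - L)%R, (0 + L)%R[)%E; first by [].
  rewrite li -EFinM; congr (_%:E); rewrite expr2; congr (_ * _); lra.
have le2 : (((size (finmap.enum_fset B))%:R * (c * eps ^+ 2))%:E <= \sum_(i \in [set` B]) area (Fs i))%E.
  apply: le_trans (lee_fsum (finite_fset B) (fun C h => Fbig C (BS _ h))).
  rewrite fsbig_finite ?finite_fset // set_fsetK.
  by rewrite sumEFin lee_fin big_const_seq count_predT iter_addr_0 mulr_natl.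
have k0 : 0 < c * eps ^+ 2 by rewrite mulr_gt0 // exprn_gt0.
have fin : (#|` B|%:R * (c * eps ^+ 2) <= (2 * L) ^+ 2).
  rewrite -lee_fin -abox; apply: le_trans le2 _; rewrite -equ; exact: le1.
have hn : (2 * L) ^+ 2 / (c * eps ^+ 2) < n%:R by exact: archimedean.Num.Theory.truncnS_gt.
rewrite ltr_pdivrMr // in hn.
have : (n%:R : R) <= #|` B|%:R by rewrite ler_nat.
move=> nB.
have : n%:R * (c * eps ^+ 2) <= #|` B|%:R * (c * eps ^+ 2) by rewrite ler_pM2r.
lra.
Qed.
Lemma edist_pos (a b : R * R) : a <> b -> 0 < Defs.edist a b.
Proof.
move: a b => [a1 a2] [b1 b2] ab; rewrite /Defs.edist sqrtr_gt0 /=.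
have [e1|n1] := eqVneq a1 b1.
  have [e2|n2] := eqVneq a2 b2; first by exfalso; apply: ab; rewrite e1 e2.
  by rewrite ltr_wpDl ?sqr_ge0 // exprn_even_gt0 //= subr_eq0.
by rewrite ltr_wpDr ?sqr_ge0 // exprn_even_gt0 //= subr_eq0.
Qed.

Lemma nondeg_big (Om : set (sphere R)) C : Om None -> compl_components Om C ->
  (exists x y, C x /\ C y /\ x <> y) ->
  exists n : nat, (n.+1%:R^-1%:E < ediam (finpart C))%E.
Proof.
move=> OmN [p [_ eC]] [x [y [Cx [Cy xy]]]].
have sub : C `<=` ~` Om by rewrite eC; exact: connected_component_sub.
case: x Cx xy => [a Ca|/sub//]; case: y Cy => [b Cb|/sub//] ab.
have ab' : a <> b by move=> e; apply: ab; rewrite e.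
have d0 := edist_pos _ _ ab'.
exists (Num.Def.truncn (Defs.edist a b)^-1).
apply: (@lt_le_trans _ _ (Defs.edist a b)%:E).
  rewrite lte_fin invf_plt ?posrE //.
  exact: archimedean.Num.Theory.truncnS_gt.
by apply: ereal_sup_ubound; exists a => //; exists b.
Qed.
End S.

Theorem lemma4p1 (R : realType) (Om : set (sphere R)) :
  open Om -> connected Om -> Om None ->
  (exists2 c : R, 0 < c &
     forall C, compl_components Om C -> fat c (finpart C)) ->
  (forall eps : R, 0 < eps ->
     finite_set [set C | compl_components Om C /\
                         (eps%:E < ediam (finpart C))%E]) /\
  countable [set C | compl_components Om C /\
                     exists x y, C x /\ C y /\ x <> y].
Proof.
move=> oOm _ OmN [c c0 fatC].
have fb : forall eps : R, 0 < eps ->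
     finite_set [set C | compl_components Om C /\
                         (eps%:E < ediam (finpart C))%E].
  by move=> eps e0; exact: (fin_big _ _ c eps oOm OmN c0 fatC e0).
split => //.
apply: (sub_countable (subset_card_le (B := \bigcup_(n in [set: nat])
   [set C | compl_components Om C /\ ((n.+1%:R^-1 : R)%:E < ediam (finpart C))%E]) _)).
  move=> C [cC nd]; have [n hn] := nondeg_big _ _ _ OmN cC nd.
  by exists n.
apply: bigcup_countable; first exact: countableP.
move=> n _; apply: finite_set_countable; apply: (fin_big _ _ c _ oOm OmN c0 fatC).
by rewrite invr_gt0 ltr0n.
Qed.
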